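(* Let $\mathcal M=(M,<,+,0,\ldots)$ be a definably complete locally o-minimal expansion of an ordered group. Let $(X,\tau)$ be a definably compact definable topological space and $\{U_t: t\in P\}$ a definable family of definable open subsets of $X$ with $X=\bigcup_{t\in P}U_t$. Then there exists a definable bounded subset $Q$ of $P$ such that $X=\bigcup_{t\in Q}U_t$.
   Context: ''Definable'' means definable in $\mathcal M$ with parameters. $\mathcal M$ is an expansion of an ordered group with dense order without endpoints; locally o-minimal: for every definable $Y\subseteq M$ and $a\in M$ there is an open interval $I\ni a$ with $Y\cap I$ a finite union of points and open intervals; definably complete: every definable subset of $M$ has sup and inf in $M\cup\{\pm\infty\}$. A family $\{U_t:t\in P\}$ is definable if $P\subseteq M^n$ and $\bigcup_t\{t\}\times U_t$ are definable; ''bounded'' for $Q\subseteq P\subseteq M^n$ means bounded in $M^n$. A definable topological space is a definable set with a topology having a definable family as open base; it is definably compact if every definable filtered family (for any two members some member lies in their intersection) of nonempty closed subsets has nonempty intersection. *)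

(* Defs.v *)
From Stdlib Require List.
From mathcomp Require Import all_boot.
Set Implicit Arguments. Unset Strict Implicit. Unset Printing Implicit Defensive.

Section Defs.
Variable M : Type.

(* A subset of M^n is encoded as a predicate on seq M (which only holds on
   sequences of size n, see [structure_on]). *)
Definition pset := seq M -> Prop.

Definition ordered_group (lt : M -> M -> Prop) (add : M -> M -> M) (zero : M)
    (opp : M -> M) : Prop :=
  ((forall x y z, add x (add y z) = add (add x y) z) /\
  (forall x, add zero x = x /\ add x zero = x) /\
  (forall x, add (opp x) x = zero /\ add x (opp x) = zero) /\
  (forall x, ~ lt x x) /\
  (forall x y z, lt x y -> lt y z -> lt x z) /\
  (forall x y, lt x y \/ x = y \/ lt y x) /\
  (forall x y z, lt x y -> lt (add z x) (add z y) /\ lt (add x z) (add y z))).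

Definition dense_no_endpoints (lt : M -> M -> Prop) : Prop :=
  [/\ (forall x y, lt x y -> exists z, lt x z /\ lt z y),
      (forall x, exists y, lt y x)
    & (forall x, exists y, lt x y)].

(** A structure on M in the sense of van den Dries ("Tame topology and
    o-minimal structures", Ch. 1): [Def n A] means A is a (distinguished,
    i.e. definable) subset of M^n. *)
Definition structure_on (Def : nat -> pset -> Prop) : Prop :=
  ((forall n A, Def n A -> forall s, A s -> size s = n) /\
  (forall n, Def n (fun s => size s = n)) /\
  (forall n A, Def n A -> Def n (fun s => size s = n /\ ~ A s)) /\
  (forall n A B, Def n A -> Def n B -> Def n (fun s => A s \/ B s)) /\
  (forall n A, Def n A -> Def n.+1 (fun s => exists x t, s = x :: t /\ A t)) /\
  (forall n A, Def n A -> Def n.+1 (fun s => exists x t, s = rcons t x /\ A t)) /\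
  (forall m, Def m.+2 (fun s => exists x t, s = x :: rcons t x /\ size t = m)) /\
  (forall n A, Def n.+1 A -> Def n (fun t => exists x, A (rcons t x)))).

(** Definable sets (with parameters) of an expansion of (M,<,+) : a structure
    containing all singletons (parameters), the order and the graph of +. *)
Definition expansion_of_ordered_group (Def : nat -> pset -> Prop)
    (lt : M -> M -> Prop) (add : M -> M -> M) (zero : M) (opp : M -> M) : Prop :=
  [/\ ordered_group lt add zero opp,
      structure_on Def,
      (forall a, Def 1 (fun s => s = [:: a])),
      Def 2 (fun s => exists x y, s = [:: x; y] /\ lt x y)
    & Def 3 (fun s => exists x y, s = [:: x; y; add x y])].

Definition def1 (Def : nat -> pset -> Prop) (Y : M -> Prop) : Prop :=
  Def 1 (fun s => exists x, s = [:: x] /\ Y x).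

(** Open intervals with endpoints in M ∪ {±∞} (None = infinite endpoint). *)
Definition in_oint (lt : M -> M -> Prop) (lo hi : option M) (x : M) : Prop :=
  (match lo with Some l => lt l x | None => True end) /\
  (match hi with Some h => lt x h | None => True end).

Definition in_piece (lt : M -> M -> Prop) (p : M + (option M * option M))
    (x : M) : Prop :=
  match p with
  | inl a => x = a
  | inr (lo, hi) => in_oint lt lo hi x
  end.

Definition locally_o_minimal (Def : nat -> pset -> Prop) (lt : M -> M -> Prop)
    : Prop :=
  forall (Y : M -> Prop) (a : M), def1 Def Y ->
    exists b c, lt b a /\ lt a c /\
      exists ps : seq (M + (option M * option M)),
        forall x, (Y x /\ lt b x /\ lt x c) <-> (exists2 p, List.In p ps & in_piece lt p x).

Inductive ext := NInf | Fin of M | PInf.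

Definition ext_le (lt : M -> M -> Prop) (u v : ext) : Prop :=
  match u, v with
  | NInf, _ => True
  | _, PInf => True
  | Fin x, Fin y => lt x y \/ x = y
  | _, _ => False
  end.

Definition has_sup (lt : M -> M -> Prop) (Y : M -> Prop) : Prop :=
  exists s : ext, (forall y, Y y -> ext_le lt (Fin y) s) /\
    (forall u : ext, (forall y, Y y -> ext_le lt (Fin y) u) -> ext_le lt s u).

Definition has_inf (lt : M -> M -> Prop) (Y : M -> Prop) : Prop :=
  exists s : ext, (forall y, Y y -> ext_le lt s (Fin y)) /\
    (forall u : ext, (forall y, Y y -> ext_le lt u (Fin y)) -> ext_le lt u s).

Definition definably_complete (Def : nat -> pset -> Prop) (lt : M -> M -> Prop)
    : Prop :=
  forall Y : M -> Prop, def1 Def Y -> has_sup lt Y /\ has_inf lt Y.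

(** Definable family {U_t : t ∈ P} with P ⊆ M^k, U_t ⊆ M^n:
    P and ⋃_t {t} × U_t are definable. *)
Definition def_family (Def : nat -> pset -> Prop) (k n : nat) (P : pset)
    (U : seq M -> pset) : Prop :=
  Def k P /\
  Def (k + n) (fun s => size s = k + n /\ P (take k s) /\ U (take k s) (drop k s)).

(** Definable topological space: a definable X ⊆ M^n together with a
    definable family {V_b : b ∈ B} (B ⊆ M^m) of subsets of X which is a base
    of a topology on X; the topology is the one generated by this base. *)
Definition def_top_space (Def : nat -> pset -> Prop) (n : nat) (X : pset)
    (m : nat) (B : pset) (V : seq M -> pset) : Prop :=
  [/\ Def n X,
      def_family Def m n B V,
      (forall b x, B b -> V b x -> X x),
      (forall x, X x -> exists b, B b /\ V b x)
    & (forall b1 b2 x, B b1 -> B b2 -> V b1 x -> V b2 x ->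
         exists b3, [/\ B b3, V b3 x & forall y, V b3 y -> V b1 y /\ V b2 y])].

Definition is_open (X : pset) (B : pset) (V : seq M -> pset) (O : pset) : Prop :=
  (forall x, O x -> X x) /\
  (forall x, O x -> exists b, [/\ B b, V b x & forall y, V b y -> O y]).

Definition is_closed (X : pset) (B : pset) (V : seq M -> pset) (C : pset) : Prop :=
  (forall x, C x -> X x) /\ is_open X B V (fun x => X x /\ ~ C x).

Definition definably_compact (Def : nat -> pset -> Prop) (n : nat) (X : pset)
    (B : pset) (V : seq M -> pset) : Prop :=
  forall (k : nat) (P : pset) (C : seq M -> pset),
    def_family Def k n P C ->
    (exists t, P t) ->
    (forall t, P t -> is_closed X B V (C t) /\ exists x, C t x) ->
    (forall t1 t2, P t1 -> P t2 ->
       exists t3, P t3 /\ forall x, C t3 x -> C t1 x /\ C t2 x) ->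
    exists x, X x /\ forall t, P t -> C t x.

Definition bounded (lt : M -> M -> Prop) (Q : pset) : Prop :=
  exists a b : M, forall s, Q s -> forall x, List.In x s ->
    ((lt a x \/ a = x) /\ (lt x b \/ x = b)).

End Defs.

(* Main.v *)
Require Import Defs.
From mathcomp Require Import all_boot.
From Stdlib Require Import Classical FunctionalExtensionality PropExtensionality.
From mathcomp Require Import zify.
Set Implicit Arguments. Unset Strict Implicit. Unset Printing Implicit Defensive.

Definition DefP (M : Type) (Def : nat -> pset M -> Prop) (p : nat) (phi : seq M -> Prop) :=
  Def p (fun y => size y = p /\ phi y).

Lemma Def_ext (M : Type) (Def : nat -> pset M -> Prop) n (A B : pset M) :
  Def n A -> (forall s, A s <-> B s) -> Def n B.
Proof.
move=> H E; have -> : B = A; last exact: H.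
apply: functional_extensionality => s; apply: propositional_extensionality.
by split => /E.
Qed.

Lemma Def_size (M : Type) (Def : nat -> pset M -> Prop) (HS : structure_on Def) n A s :
  Def n A -> A s -> size s = n.
Proof. by case: HS => h _ H; apply: h. Qed.

Lemma Def_DefP (M : Type) (Def : nat -> pset M -> Prop) (HS : structure_on Def) p A
  (phi : seq M -> Prop) :
  Def p A -> (forall y, size y = p -> (A y <-> phi y)) -> DefP Def p phi.
Proof.
move=> H E; apply: (Def_ext H) => s; split.
  by move=> As; have Hs := Def_size HS H As; split => //; apply/E.
by case=> Hs Ps; apply/E.
Qed.

Lemma DefP_ext (M : Type) (Def : nat -> pset M -> Prop) (HS : structure_on Def) p
  (phi psi : seq M -> Prop) :
  DefP Def p phi -> (forall y, size y = p -> (phi y <-> psi y)) -> DefP Def p psi.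
Proof.
move=> H E; apply: (Def_DefP HS H) => y Hy; split; first by case=> _ /E; apply.
by move=> /(E _ Hy).
Qed.

Lemma DefP_true (M : Type) (Def : nat -> pset M -> Prop) (HS : structure_on Def) p :
  DefP Def p (fun _ => True).
Proof.
case: HS => _ [h2 _]; apply: (Def_ext (h2 p)) => s; by split => // [][].
Qed.

Lemma DefP_not (M : Type) (Def : nat -> pset M -> Prop) (HS : structure_on Def) p phi :
  DefP Def p phi -> DefP Def p (fun y => ~ phi y).
Proof.
move=> H; have HS' := HS; case: HS' => _ [_ [h3 _]].
apply: (Def_DefP HS (h3 _ _ H)) => y Hy; split; first by case=> _ N P; apply: N.
by move=> N; split => // [][].
Qed.

Lemma DefP_or (M : Type) (Def : nat -> pset M -> Prop) (HS : structure_on Def) p phi psi :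
  DefP Def p phi -> DefP Def p psi -> DefP Def p (fun y => phi y \/ psi y).
Proof.
move=> H1 H2; have HS' := HS; case: HS' => _ [_ [_ [h4 _]]].
apply: (Def_DefP HS (h4 _ _ _ H1 H2)) => y Hy; split; first by case=> [][]; auto.
by case; auto.
Qed.

Lemma DefP_and (M : Type) (Def : nat -> pset M -> Prop) (HS : structure_on Def) p phi psi :
  DefP Def p phi -> DefP Def p psi -> DefP Def p (fun y => phi y /\ psi y).
Proof.
move=> H1 H2.
have H := DefP_not HS (DefP_or HS (DefP_not HS H1) (DefP_not HS H2)).
apply: (DefP_ext HS H) => y _; split.
  by move=> N; split; apply: NNPP => N'; apply: N; auto.
by case=> a b [].
Qed.

Lemma DefP_forall_lt (M : Type) (Def : nat -> pset M -> Prop) (HS : structure_on Def) N K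
  (phi : nat -> seq M -> Prop) :
  (forall l, l < K -> DefP Def N (phi l)) ->
  DefP Def N (fun y => forall l, l < K -> phi l y).
Proof.
elim: K => [|K IH] H.
  by apply: (DefP_ext HS (DefP_true HS N)) => y _; split.
have := DefP_and HS (IH (fun l Hl => H l (ltnW Hl))) (H K (ltnSn K)).
move=> H'; apply: (DefP_ext HS H') => y _; split.
  case=> A B l; rewrite ltnS leq_eqVlt; case/orP => [/eqP->|] //; exact: A.
by move=> A; split => [l Hl|]; apply: A => //; apply: ltnW.
Qed.

Lemma DefP_ex1 (M : Type) (Def : nat -> pset M -> Prop) (HS : structure_on Def) p phi :
  DefP Def p.+1 phi -> DefP Def p (fun y => exists x, phi (rcons y x)).
Proof.
move=> H; have HS' := HS; case: HS' => _ [_ [_ [_ [_ [_ [_ h8]]]]]].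
apply: (Def_DefP HS (h8 _ _ H)) => y Hy; split; first by case=> x [_ P]; exists x.
by case=> x P; exists x; rewrite size_rcons Hy.
Qed.

Lemma DefP_ex (M : Type) (Def : nat -> pset M -> Prop) (HS : structure_on Def) p j phi :
  DefP Def (p + j) phi -> DefP Def p (fun y => exists z, size z = j /\ phi (y ++ z)).
Proof.
elim: j phi => [|j IH] phi H.
  rewrite addn0 in H; apply: (DefP_ext HS H) => y _; split.
    by move=> P; exists [::]; rewrite cats0.
  by case=> z [/size0nil -> ]; rewrite cats0.
rewrite addnS in H; have := IH _ (DefP_ex1 HS H) => H'.
apply: (DefP_ext HS H') => y _; split.
  by case=> z [Hz [x P]]; exists (rcons z x); rewrite size_rcons Hz -rcons_cat.
case=> z []; case/lastP: z => [|z x]; first by [].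
by rewrite size_rcons => [][Hz] P; exists z; split => //; exists x; rewrite rcons_cat.
Qed.

Lemma DefP_front (M : Type) (Def : nat -> pset M -> Prop) (HS : structure_on Def) n j phi :
  DefP Def n phi -> DefP Def (j + n) (fun s => phi (drop j s)).
Proof.
have HS' := HS; case: HS' => _ [_ [_ [_ [h5 _]]]].
elim: j => [|j IH] H.
  by apply: (DefP_ext HS H) => y _; rewrite drop0.
have := h5 _ _ (IH H) => H'; rewrite -addSn in H'.
apply: (Def_DefP HS H') => y Hy; split.
  by case=> x [t [-> [_ P]]].
case: y Hy => [|x t] //= [Ht] P; exists x, t; split => //; split => //.
Qed.

Lemma DefP_back (M : Type) (Def : nat -> pset M -> Prop) (HS : structure_on Def) n j phi :
  DefP Def n phi -> DefP Def (n + j) (fun s => phi (take n s)).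
Proof.
have HS' := HS; case: HS' => _ [_ [_ [_ [_ [h6 _]]]]].
elim: j => [|j IH] H.
  rewrite addn0; apply: (DefP_ext HS H) => y Hy; by rewrite take_oversize // Hy.
have := h6 _ _ (IH H) => H'; rewrite -addnS in H'.
apply: (Def_DefP HS H') => y Hy; split.
  case=> x [t [-> [Ht P]]]; by rewrite -cats1 takel_cat // Ht leq_addr.
case/lastP: y Hy => [|t x]; first by rewrite addnS.
rewrite size_rcons addnS => -[Ht] P; exists x, t; split => //; split => //.
by move: P; rewrite -cats1 takel_cat // Ht leq_addr.
Qed.

Lemma DefP_diag0 (M : Type) (Def : nat -> pset M -> Prop) (HS : structure_on Def) (d : M) m :
  DefP Def m.+2 (fun s => nth d s 0 = nth d s m.+1).
Proof.
have HS' := HS; case: HS' => _ [_ [_ [_ [_ [_ [h7 _]]]]]].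
apply: (Def_DefP HS (h7 m)) => y Hy; split.
  by case=> x [t [-> Ht]] /=; rewrite nth_rcons Ht ltnn eqxx.
case: y Hy => [|x y] //= [Hy]; case/lastP: y Hy => [|t z] //; rewrite size_rcons => -[Ht].
rewrite nth_rcons Ht ltnn eqxx => ->; by exists z, t.
Qed.

Lemma DefP_diag (M : Type) (Def : nat -> pset M -> Prop) (HS : structure_on Def) (d : M) i j N :
  i < j -> j < N -> DefP Def N (fun s => nth d s i = nth d s j).
Proof.
move=> Hij HjN; have [m Hm] : exists m, j = i + m.+1 by exists (j - i - 1); lia.
subst j.
have H2 := DefP_back HS (N - (i + m.+2)) (DefP_front HS i (DefP_diag0 HS d m)).
have E : i + m.+2 + (N - (i + m.+2)) = N by lia.
rewrite E in H2; apply: (DefP_ext HS H2) => y Hy.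
rewrite !nth_drop !nth_take ?addn0 //; lia.
Qed.

Lemma DefP_eq (M : Type) (Def : nat -> pset M -> Prop) (HS : structure_on Def) (d : M) i j N :
  i < N -> j < N -> DefP Def N (fun s => nth d s i = nth d s j).
Proof.
move=> Hi Hj; case: (ltngtP i j) => [h|h|->].
- exact: DefP_diag.
- by apply: (DefP_ext HS (DefP_diag HS d h Hi)) => y _; split => ->.
- by apply: (DefP_ext HS (DefP_true HS N)) => y _; split.
Qed.

Lemma DefP_preim (M : Type) (Def : nat -> pset M -> Prop) (HS : structure_on Def) (d : M)
  n p (sg : seq nat) phi :
  DefP Def n phi -> size sg = n -> (forall l, l < n -> nth 0 sg l < p) ->
  DefP Def p (fun y => phi (map (nth d y) sg)).
Proof.
move=> H Hs Hb.
have H1 := DefP_front HS p H.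
have H2 : DefP Def (p + n) (fun w => forall l, l < n -> nth d w (nth 0 sg l) = nth d w (p + l)).
  apply: DefP_forall_lt => // l Hl; apply: DefP_eq => //.
    by apply: ltn_addr; apply: Hb.
  by rewrite ltn_add2l.
have H3 := DefP_ex HS (DefP_and HS H1 H2).
apply: (DefP_ext HS H3) => y Hy; split.
  case=> z [Hz [P E]]; rewrite drop_size_cat // in P.
  suff -> : map (nth d y) sg = z by [].
  apply: (@eq_from_nth _ d); first by rewrite size_map Hs.
  rewrite size_map Hs => l Hl; rewrite (nth_map 0) ?Hs //.
  have := E l Hl; rewrite !nth_cat Hy Hb // ltnNge leq_addr /= => ->.
  by rewrite addKn.
move=> P; exists (map (nth d y) sg); split; first by rewrite size_map.
split; first by rewrite drop_size_cat.
move=> l Hl; rewrite !nth_cat Hy Hb // ltnNge leq_addr /= addKn (nth_map 0) ?Hs //.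
Qed.

Lemma DefP_lt (M : Type) (Def : nat -> pset M -> Prop) (HS : structure_on Def) (d : M)
  (lt : M -> M -> Prop) i j p :
  Def 2 (fun s => exists x y, s = [:: x; y] /\ lt x y) -> i < p -> j < p ->
  DefP Def p (fun y => lt (nth d y i) (nth d y j)).
Proof.
move=> H Hi Hj.
have H2 : DefP Def 2 (fun y => lt (nth d y 0) (nth d y 1)).
  apply: (Def_DefP HS H) => y; case: y => [|a [|b [|c t]]] //= _; split.
    by case=> x [z [[-> ->]]].
  by move=> h; exists a, b.
apply: (DefP_ext HS (DefP_preim HS d H2 (sg := [:: i; j]) (p := p) erefl _)) => //.
by case=> [|[|l]].
Qed.

Lemma DefP_const (M : Type) (Def : nat -> pset M -> Prop) (HS : structure_on Def) (d : M)
  (a : M) i p :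
  Def 1 (fun s => s = [:: a]) -> i < p ->
  DefP Def p (fun y => nth d y i = a).
Proof.
move=> H Hi.
have H2 : DefP Def 1 (fun y => nth d y 0 = a).
  apply: (Def_DefP HS H) => y; case: y => [|b [|c t]] //= _; split; first by case.
  by move=> ->.
apply: (DefP_ext HS (DefP_preim HS d H2 (sg := [:: i]) (p := p) erefl _)) => //.
by case=> [|l].
Qed.

Definition le_ (M : Type) (lt : M -> M -> Prop) x y := lt x y \/ x = y.

Definition Box (M : Type) (lt : M -> M -> Prop) (d a b : M) (u : seq M) :=
  forall l, l < size u -> le_ lt a (nth d u l) /\ le_ lt (nth d u l) b.

Lemma DefP_le (M : Type) (Def : nat -> pset M -> Prop) (HS : structure_on Def) (d : M)
  (lt : M -> M -> Prop) i j p :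
  Def 2 (fun s => exists x y, s = [:: x; y] /\ lt x y) -> i < p -> j < p ->
  DefP Def p (fun y => le_ lt (nth d y i) (nth d y j)).
Proof.
move=> H Hi Hj; exact: (DefP_or HS (DefP_lt HS d H Hi Hj) (DefP_eq HS d Hi Hj)).
Qed.

Lemma In_nth_ex (M : Type) (d x : M) (s : seq M) :
  List.In x s -> exists2 l, l < size s & nth d s l = x.
Proof.
elim: s => [|y s IH] //= [->|/IH [l Hl E]]; first by exists 0.
by exists l.+1.
Qed.

Lemma lower_ex (M : Type) (R : M -> M -> Prop) (d : M) :
  (forall x y z, R x y -> R y z -> R x z) ->
  (forall x y, R x y \/ x = y \/ R y x) ->
  (forall x, exists y, R y x) ->
  forall u c, exists a, R a c /\ forall l, l < size u -> R a (nth d u l).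
Proof.
move=> Htr Htri Hb; elim=> [|y u IH] c.
  by have [a Ha] := Hb c; exists a.
have [a [Hac Hau]] := IH c.
have [mm [Hma Hmy]] : exists mm, (R mm a \/ mm = a) /\ (R mm y \/ mm = y).
  case: (Htri a y) => [h|[h|h]]; first by exists a; auto.
    by exists a; subst; auto.
  by exists y; auto.
have [a' Ha'] := Hb mm.
have Ha'a : R a' a by case: Hma => [h|<-] //; exact: Htr h.
have Ha'y : R a' y by case: Hmy => [h|<-] //; exact: Htr h.
exists a'; split; first exact: Htr Hac.
by case=> [|l] //= Hl; apply: Htr Ha'a (Hau l Hl).
Qed.

Theorem theorem4p22 (M : Type) (Def : nat -> pset M -> Prop)
    (lt : M -> M -> Prop) (add : M -> M -> M) (zero : M) (opp : M -> M) :
  expansion_of_ordered_group Def lt add zero opp ->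
  dense_no_endpoints lt ->
  locally_o_minimal Def lt ->
  definably_complete Def lt ->
  forall (n : nat) (X : pset M) (m : nat) (B : pset M) (V : seq M -> pset M),
  def_top_space Def n X m B V ->
  definably_compact Def n X B V ->
  forall (k : nat) (P : pset M) (U : seq M -> pset M),
  def_family Def k n P U ->
  (forall t, P t -> is_open X B V (U t)) ->
  (forall x, X x -> exists t, P t /\ U t x) ->
  exists Q : pset M,
    [/\ Def k Q, (forall t, Q t -> P t), bounded lt Q
      & forall x, X x -> exists t, Q t /\ U t x].
Proof.
move=> [Hog HS Hsing Hlt _] [_ Hbelow Habove] _ _ n X m B V [HX _ HBX _ _] Hcomp
  k P U [HP HU] Uopen Ucov.
case: Hog => _ [_ [_ [Hirr [Htr [Htri _]]]]].
set d := zero.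
have DU : DefP Def (k + n) (fun s => P (take k s) /\ U (take k s) (drop k s)) := HU.
have DX : DefP Def n X := Def_DefP HS HX (fun y _ => iff_refl _).
have DP : DefP Def k P := Def_DefP HS HP (fun y _ => iff_refl _).
have leltT : forall x y z, le_ lt x y -> lt y z -> lt x z.
  by move=> x y z [h|->] // h'; exact: Htr h h'.
have ltleT : forall x y z, lt x y -> le_ lt y z -> lt x z.
  by move=> x y z h [h'|<-] //; exact: Htr h h'.
have leT : forall x y z, le_ lt x y -> le_ lt y z -> le_ lt x z.
  move=> x y z [h|->] // [h'|<-]; [left; exact: Htr h h'| by left].
have BoxW : forall a b a' b' u, le_ lt a' a -> le_ lt b b' -> Box lt d a b u -> Box lt d a' b' u.
  move=> a b a' b' u h1 h2 H l Hl; have [h3 h4] := H l Hl; split; [exact: leT h1 h3|exact: leT h4 h2].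
case: (classic (exists a b, lt a b /\ forall x, X x -> exists u, P u /\ Box lt d a b u /\ U u x)).
  case=> a [b [Hab Hcov]].
  exists (fun u => P u /\ Box lt d a b u); split.
  - have DB : DefP Def k (Box lt d a b).
      have H1 : DefP Def (k + 2) (fun w => nth d w k = a /\ nth d w k.+1 = b /\
          forall l, l < k -> le_ lt (nth d w k) (nth d w l) /\ le_ lt (nth d w l) (nth d w k.+1)).
        apply: DefP_and => //; first by apply: DefP_const => //; lia.
        apply: DefP_and => //; first by apply: DefP_const => //; lia.
        apply: DefP_forall_lt => // l Hl; apply: DefP_and => //; apply: DefP_le => //; lia.
      apply: (DefP_ext HS (DefP_ex HS H1)) => y Hy.
      have E1 : forall z i, nth d (y ++ z) (k + i) = nth d z i.
        by move=> z i; rewrite nth_cat Hy ltnNge leq_addr /= addKn.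
      have E2 : forall z i, i < k -> nth d (y ++ z) i = nth d y i.
        by move=> z i hi; rewrite nth_cat Hy hi.
      have Ek : forall z, nth d (y ++ z) k = nth d z 0 by move=> z; rewrite -(E1 z 0) addn0.
      have Ek1 : forall z, nth d (y ++ z) k.+1 = nth d z 1 by move=> z; rewrite -(E1 z 1) addn1.
      split.
        case=> z [Hz [Ea [Eb Hb]]] l Hl; rewrite Hy in Hl.
        rewrite Ek in Ea; rewrite Ek1 in Eb.
        have := Hb l Hl; rewrite Ek Ek1 Ea Eb !E2 //.
      move=> Hb; exists [:: a; b]; split => //.
      rewrite Ek Ek1; split => //; split => // l Hl; rewrite !E2 //.
      by apply: Hb; rewrite Hy.
    have HH := DefP_and HS DP DB; rewrite /DefP in HH.
    apply: (Def_ext HH) => s; split; first by case=> _ [].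
    by case=> Ps Bs; split => //; apply: (Def_size HS HP Ps).
  - by move=> t [].
  - exists a, b => s [_ Bs] x /(In_nth_ex d) [l Hl <-]; exact: Bs.
  - by move=> x /Hcov [u [Pu [Bu Uux]]]; exists u.
move=> Hno; exfalso.
pose Pidx := fun t : seq M => size t = 2 /\ lt (nth d t 0) (nth d t 1).
pose Cf := fun (t : seq M) x => X x /\
  ~ (exists u, P u /\ Box lt d (nth d t 0) (nth d t 1) u /\ U u x).
have Hfam : def_family Def 2 n Pidx Cf.
  split; first exact: (@DefP_lt _ _ HS d lt 0 1 2 Hlt erefl erefl).
  pose Phi := fun w : seq M =>
    (P (map (nth d w) (iota (2 + n) k)) /\ U (map (nth d w) (iota (2 + n) k)) (map (nth d w) (iota 2 n)))
    /\ forall l, l < k -> le_ lt (nth d w 0) (nth d w (2 + n + l)) /\ le_ lt (nth d w (2 + n + l)) (nth d w 1).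
  have DPhi : DefP Def (2 + n + k) Phi.
    apply: DefP_and => //.
      have := DefP_preim HS d DU (sg := iota (2 + n) k ++ iota 2 n) (p := 2 + n + k).
      rewrite size_cat !size_iota addnC => H; have {}H := H erefl.
      have {}H : DefP Def (2 + n + k)
        (fun y => P (take k (map (nth d y) (iota (2 + n) k ++ iota 2 n))) /\
           U (take k (map (nth d y) (iota (2 + n) k ++ iota 2 n)))
             (drop k (map (nth d y) (iota (2 + n) k ++ iota 2 n)))).
        apply: H => l Hl; rewrite nth_cat size_iota; case: ifP => h.
          rewrite nth_iota //; lia.
        rewrite nth_iota; lia.
      apply: (DefP_ext HS H) => y _.
      by rewrite map_cat take_size_cat ?size_map ?size_iota // drop_size_cat ?size_map ?size_iota.
    apply: DefP_forall_lt => // l Hl; apply: DefP_and => //; apply: DefP_le => //; lia.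
  have DPsi := DefP_and HS (@DefP_lt _ _ HS d lt 0 1 (2 + n) Hlt erefl erefl)
     (DefP_and HS (DefP_front HS 2 DX) (DefP_not HS (DefP_ex HS DPhi))).
  apply: (DefP_ext HS DPsi) => s Hs.
  have Hts : size (take 2 s) = 2 by rewrite size_takel // Hs.
  rewrite /Pidx /Cf !nth_take // Hts.
  have key : forall u, size u = k ->
      (Phi (s ++ u) <-> P u /\ Box lt d (nth d s 0) (nth d s 1) u /\ U u (drop 2 s)).
    move=> u Hu; rewrite /Phi !map_nth_iota ?size_cat ?Hs ?Hu; try lia.
    have E1 : take k (drop (2 + n) (s ++ u)) = u by rewrite drop_size_cat // -Hu take_size.
    have E2 : take n (drop 2 (s ++ u)) = drop 2 s.
      rewrite -{1}(cat_take_drop 2 s) -catA drop_size_cat // take_size_cat //.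
      by rewrite size_drop Hs addKn.
    have E3 : forall l, nth d (s ++ u) (2 + n + l) = nth d u l.
      by move=> l; rewrite nth_cat Hs ltnNge leq_addr /= addKn.
    rewrite E1 E2.
    rewrite !nth_cat Hs /=.
    split.
      case=> [[Pu Uu] Hb]; split => //; split => // l Hl; have := Hb l; rewrite Hu in Hl.
      by rewrite E3; apply.
    case=> Pu [Hb Uu]; split => // l Hl; rewrite E3; apply: Hb; lia.
  split.
    case=> H1 [H2 H3]; split; first by split.
    split => //.
    case=> u [Pu [Bu Uu]]; apply: H3; exists u; have Hu := Def_size HS HP Pu.
    by split => //; apply/(key u Hu).
  case=> [[_ H1] [H2 H3]]; split => //; split => //.
  case=> u [Hu /(key u Hu) Hk]; apply: H3; by exists u.
have [y Hy] := Habove zero.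
have := Hcomp 2 Pidx Cf Hfam.
case.
- by exists [:: zero; y].
- move=> t [Ht Hlt01]; split.
    split; first by move=> x [].
    split; first by move=> x [].
    move=> x [Xx NC].
    have [u [Pu [Bu Uux]]] : exists u, P u /\ Box lt d (nth d t 0) (nth d t 1) u /\ U u x.
      apply: NNPP => N; apply: NC; by split.
    have [_ Ho] := Uopen u Pu; have [b [Bb Vbx Hb]] := Ho x Uux.
    exists b; split => // z Vz; have Uz := Hb z Vz; split; first by case: (Uopen u Pu) => h _; exact: h.
    by case=> _; apply; exists u.
  apply: NNPP => N; apply: Hno; exists (nth d t 0), (nth d t 1); split => // x Xx.
  apply: NNPP => N'; apply: N; exists x; split => //.
- move=> t1 t2 [_ H1] [_ H2].
  have [a3 [Ha1 Ha2]] : exists a3, le_ lt a3 (nth d t1 0) /\ le_ lt a3 (nth d t2 0).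
    case: (Htri (nth d t1 0) (nth d t2 0)) => [h|[h|h]].
    + by exists (nth d t1 0); split; [right|left].
    + by exists (nth d t1 0); split; right.
    + by exists (nth d t2 0); split; [left|right].
  have [b3 [Hb1 Hb2]] : exists b3, le_ lt (nth d t1 1) b3 /\ le_ lt (nth d t2 1) b3.
    case: (Htri (nth d t1 1) (nth d t2 1)) => [h|[h|h]].
    + by exists (nth d t2 1); split; [left|right].
    + by exists (nth d t2 1); split; right.
    + by exists (nth d t1 1); split; [right|left].
  exists [:: a3; b3]; split.
    split => //=; apply: leltT Ha1 _; apply: ltleT H1 Hb1.
  move=> x [Xx NC]; split; split => // -[u [Pu [Bu Uu]]]; apply: NC; exists u; split => //; split => //.
  + exact: BoxW Ha1 Hb1 Bu.
  + exact: BoxW Ha2 Hb2 Bu.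
- move=> x [Xx Hall].
  have [u [Pu Uux]] := Ucov x Xx.
  have [a [Ha0 Hau]] := lower_ex d Htr Htri Hbelow u zero.
  have [b [Hb0 Hbu]] := lower_ex (R := fun x y => lt y x) d
     (fun x y z h1 h2 => Htr _ _ _ h2 h1)
     (fun x y => match Htri x y with or_introl h => or_intror (or_intror h)
        | or_intror (or_introl h) => or_intror (or_introl h)
        | or_intror (or_intror h) => or_introl h end) Habove u zero.
  have [_ NC] := Hall [:: a; b] (conj erefl (Htr _ _ _ Ha0 Hb0)).
  apply: NC; exists u; split => //; split => // l Hl; split; left; [exact: Hau|exact: Hbu].
Qed.
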